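(* Let $A$ be a unital ring and let $p\in A$ be a full idempotent. Then $\operatorname{sr}(A)\le \operatorname{sr}(pAp)$.
   Context: An idempotent $p$ in a unital ring $A$ is full if $ApA=A$ (the two-sided ideal generated by $p$ is $A$). A row $(a_1,\dots,a_n)\in A^n$ is right unimodular if $\sum_{i=1}^n a_iA=A$. A row $(a_1,\dots,a_n,b)\in A^{n+1}$ is reducible if there exist $c_1,\dots,c_n\in A$ such that $(a_1+bc_1,\dots,a_n+bc_n)$ is right unimodular. The (Bass) stable rank $\operatorname{sr}(A)$ is the least positive integer $n$ such that every right unimodular row in $A^{n+1}$ is reducible, or $\infty$ if no such $n$ exists. The corner $pAp$ is a ring with identity $p$. *)

(* Defs.v *)
From mathcomp Require Import all_boot all_order all_algebra.
Set Implicit Arguments. Unset Strict Implicit. Unset Printing Implicit Defensive.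
Import GRing.Theory.
Local Open Scope ring_scope.

Section Defs.
Variable A : pzRingType.

Definition is_idem (p : A) : Prop := p * p = p.

(* ApA = A : every element is a finite sum of elements u * p * v *)
Definition is_full (p : A) : Prop :=
  forall x : A, exists (k : nat) (u v : 'I_k -> A),
    x = \sum_(i < k) u i * p * v i.

Definition right_unimodular (n : nat) (a : 'I_n -> A) : Prop :=
  forall x : A, exists c : 'I_n -> A, \sum_(i < n) a i * c i = x.

(* the row (a_1,...,a_n,b) in A^{n+1}, written as (a, b) *)
Definition right_unimodular_ext (n : nat) (a : 'I_n -> A) (b : A) : Prop :=
  forall x : A, exists (c : 'I_n -> A) (d : A),
    \sum_(i < n) a i * c i + b * d = x.

Definition reducible (n : nat) (a : 'I_n -> A) (b : A) : Prop :=
  exists c : 'I_n -> A, right_unimodular (fun i => a i + b * c i).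

Definition sr_cond (n : nat) : Prop :=
  forall (a : 'I_n -> A) (b : A), right_unimodular_ext a b -> reducible a b.

(* The corner ring pAp: carrier {x | p * x * p = x}, same + and *, unit p. *)
Definition in_corner (p x : A) : Prop := p * x * p = x.

Definition corner_right_unimodular (p : A) (n : nat) (a : 'I_n -> A) : Prop :=
  forall x : A, in_corner p x ->
    exists c : 'I_n -> A, (forall i, in_corner p (c i)) /\
      \sum_(i < n) a i * c i = x.

Definition corner_right_unimodular_ext (p : A) (n : nat) (a : 'I_n -> A) (b : A)
  : Prop :=
  forall x : A, in_corner p x ->
    exists (c : 'I_n -> A) (d : A),
      [/\ (forall i, in_corner p (c i)), in_corner p d &
          \sum_(i < n) a i * c i + b * d = x].

Definition corner_reducible (p : A) (n : nat) (a : 'I_n -> A) (b : A) : Prop :=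
  exists c : 'I_n -> A, (forall i, in_corner p (c i)) /\
    corner_right_unimodular p (fun i => a i + b * c i).

Definition corner_sr_cond (p : A) (n : nat) : Prop :=
  forall (a : 'I_n -> A) (b : A),
    (forall i, in_corner p (a i)) -> in_corner p b ->
    corner_right_unimodular_ext p a b -> corner_reducible p a b.
End Defs.

(* Stable rank as a value in N_{>=1} ∪ {∞} (None = ∞):
   the least positive n satisfying cond, or ∞ if none. *)
Definition is_stable_rank (cond : nat -> Prop) (s : option nat) : Prop :=
  match s with
  | Some n => (0 < n)%N /\ cond n /\ (forall m, (0 < m)%N -> (m < n)%N -> ~ cond m)
  | None => forall n, (0 < n)%N -> ~ cond n
  end.

Definition ext_le (s t : option nat) : Prop :=
  match s, t with
  | _, None => True
  | None, Some _ => False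
  | Some m, Some n => (m <= n)%N
  end.

(* Main.v *)
Require Import Defs.
From mathcomp Require Import all_boot all_order all_algebra.
From HB Require Import structures.
Set Implicit Arguments. Unset Strict Implicit. Unset Printing Implicit Defensive.
Import GRing.Theory.
Local Open Scope ring_scope.


Section Corner.
Variables (A : pzRingType) (p : A).
Definition corner of p * p = p := {x : A | p * x * p == x}.
Variable Hp : p * p = p.
Local Notation B := (corner Hp).
HB.instance Definition _ := Choice.copy B {x : A | p * x * p == x}.
HB.instance Definition _ := SubType.copy B {x : A | p * x * p == x}.

Lemma cl_add (x y : B) : p * (val x + val y) * p == val x + val y.
Proof. by rewrite mulrDr mulrDl (eqP (valP x)) (eqP (valP y)). Qed.
Lemma cl_opp (x : B) : p * (- val x) * p == - val x.
Proof. by rewrite mulrN mulNr (eqP (valP x)). Qed.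
Lemma cl_zero : p * 0 * p == 0 :> A.
Proof. by rewrite mulr0 mul0r. Qed.
Lemma pxE (x : B) : p * val x = val x.
Proof. by rewrite -[in LHS](eqP (valP x)) !mulrA Hp (eqP (valP x)). Qed.
Lemma xpE (x : B) : val x * p = val x.
Proof. by rewrite -[in LHS](eqP (valP x)) -!mulrA Hp !mulrA (eqP (valP x)). Qed.
Lemma cl_mul (x y : B) : p * (val x * val y) * p == val x * val y.
Proof. by rewrite mulrA pxE -mulrA xpE. Qed.
Lemma cl_one : p * p * p == p.
Proof. by rewrite !Hp. Qed.

Definition cadd (x y : B) : B := exist (fun z : A => p * z * p == z) _ (cl_add x y).
Definition copp (x : B) : B := exist (fun z : A => p * z * p == z) _ (cl_opp x).
Definition czero : B := exist (fun z : A => p * z * p == z) _ cl_zero.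
Definition cmul (x y : B) : B := exist (fun z : A => p * z * p == z) _ (cl_mul x y).
Definition cone : B := exist (fun z : A => p * z * p == z) _ cl_one.

Lemma caddA : associative cadd.
Proof. by move=> x y z; apply: val_inj => /=; rewrite addrA. Qed.
Lemma caddC : commutative cadd.
Proof. by move=> x y; apply: val_inj => /=; rewrite addrC. Qed.
Lemma cadd0 : left_id czero cadd.
Proof. by move=> x; apply: val_inj => /=; rewrite add0r. Qed.
Lemma caddN : left_inverse czero copp cadd.
Proof. by move=> x; apply: val_inj => /=; rewrite addNr. Qed.
Lemma cmulA : associative cmul.
Proof. by move=> x y z; apply: val_inj => /=; rewrite mulrA. Qed.
Lemma cmul1 : left_id cone cmul.
Proof. by move=> x; apply: val_inj => /=; rewrite pxE. Qed.
Lemma cmulr1 : right_id cone cmul.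
Proof. by move=> x; apply: val_inj => /=; rewrite xpE. Qed.
Lemma cmulDl : left_distributive cmul cadd.
Proof. by move=> x y z; apply: val_inj => /=; rewrite mulrDl. Qed.
Lemma cmulDr : right_distributive cmul cadd.
Proof. by move=> x y z; apply: val_inj => /=; rewrite mulrDr. Qed.

HB.instance Definition _ := GRing.isPzRing.Build B caddA caddC cadd0 caddN
  cmulA cmul1 cmulr1 cmulDl cmulDr.

Lemma cvalD (x y : B) : val (x + y) = val x + val y. Proof. by []. Qed.
Lemma cvalM (x y : B) : val (x * y) = val x * val y. Proof. by []. Qed.
Lemma cval1 : val (1 : B) = p. Proof. by []. Qed.
Lemma cval0 : val (0 : B) = 0. Proof. by []. Qed.
End Corner.
Section ML.
Variable R : pzRingType.

Definition runi r c (X : 'M[R]_(r,c)) := exists Z : 'M[R]_(c,r), X *m Z = 1%:M.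
Definition SRm (m : nat) := forall (a : 'M[R]_(1,m)) (g : 'M[R]_1),
  runi (row_mx a g) -> exists c : 'M[R]_(1,m), runi (a + g *m c).

Lemma row_split r n1 n2 (a : 'M[R]_(r, n1 + n2)) : exists a1 a2, a = row_mx a1 a2.
Proof. by exists (lsubmx a), (rsubmx a); rewrite hsubmxK. Qed.
Lemma col_split n1 n2 c (a : 'M[R]_(n1 + n2, c)) : exists a1 a2, a = col_mx a1 a2.
Proof. by exists (usubmx a), (dsubmx a); rewrite vsubmxK. Qed.

Lemma runi_mulr r c d (X : 'M[R]_(r,c)) (Y : 'M_(c,d)) (W : 'M_(d,c)) :
  runi X -> Y *m W = 1%:M -> runi (X *m Y).
Proof. case=> Z hZ hW; exists (W *m Z). by rewrite -mulmxA (mulmxA Y) hW mul1mx. Qed.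

Lemma runi_mull r s c (L : 'M[R]_(s,r)) (X : 'M_(r,c)) :
  runi L -> runi X -> runi (L *m X).
Proof. case=> M hM [Z hZ]; exists (Z *m M). by rewrite -mulmxA (mulmxA X) hZ mul1mx. Qed.

Lemma runi_cancell r c (L Li : 'M[R]_(r,r)) (X : 'M_(r,c)) :
  Li *m L = 1%:M -> runi (L *m X) -> runi X.
Proof.
move=> hL [Z hZ]; exists (Z *m L).
have: Li *m (L *m X *m Z) *m L = 1%:M by rewrite hZ mulmx1 hL.
by rewrite !mulmxA hL mul1mx -!mulmxA.
Qed.

Lemma runi_usub K c (X : 'M[R]_(1 + K, c)) : runi X -> runi (usubmx X).
Proof.
case=> Z hZ; exists (Z *m col_mx 1%:M 0).
move: hZ; rewrite -[X in X *m _]vsubmxK mul_col_mx (scalar_mx_block 1 K) /block_mx.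
by case/eq_col_mx => h1 _; rewrite mulmxA h1 mul_row_col mul1mx mul0mx addr0.
Qed.

Lemma runi_dsub K c (X : 'M[R]_(1 + K, c)) : runi X -> runi (dsubmx X).
Proof.
case=> Z hZ; exists (Z *m col_mx 0 1%:M).
move: hZ; rewrite -[X in X *m _]vsubmxK mul_col_mx (scalar_mx_block 1 K) /block_mx.
by case/eq_col_mx => _ h1; rewrite mulmxA h1 mul_row_col mul1mx mul0mx add0r.
Qed.

Lemma SRmS m : SRm m -> SRm m.+1.
Proof.
move=> H; change (SRm (1 + m)); move=> a g [Z hZ].
case: (row_split a) => a0 [a' Ha]; subst a.
case: (col_split Z) => x [y Hz]; subst Z.
case: (col_split x) => x0 [x' Hx]; subst x.
move: hZ; rewrite !mul_row_col => hZ.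
have : runi (row_mx a' (a0 *m x0 + g *m y)).
  by exists (col_mx x' 1%:M); rewrite mul_row_col mulmx1 -hZ addrCA addrA.
case/H => c' [z' hz'].
exists (row_mx 0 (y *m c')).
exists (col_mx (x0 *m c' *m z') z').
rewrite mul_mx_row mulmx0 add_row_mx addr0 mul_row_col -hz'.
by rewrite !mulmxDl !mulmxA addrCA.
Qed.

Lemma SRm_mono n m : SRm n -> (n <= m)%N -> SRm m.
Proof.
move=> Hn; elim: m => [|m IH]; first by rewrite leqn0 => /eqP <-.
rewrite leq_eqVlt => /orP [/eqP <- // | ]; rewrite ltnS => /IH; exact: SRmS.
Qed.

Lemma T1 m k' (a : 'M[R]_(1,m)) (g : 'M_(1,k')) :
  SRm m -> runi (row_mx a g) -> exists h : 'M_(k', m), runi (a + g *m h).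
Proof.
move=> H [Z hZ].
case: (col_split Z) => x [y Hz]; subst Z.
have : runi (row_mx a (g *m y)) by exists (col_mx x 1%:M); rewrite mul_row_col mulmx1 -hZ mul_row_col.
case/H => c hc; exists (y *m c); by rewrite mulmxA.
Qed.

Lemma upper_inv n1 n2 (X : 'M[R]_(n1,n2)) :
  block_mx 1%:M X 0 1%:M *m block_mx 1%:M (-X) 0 1%:M = 1%:M.
Proof.
by rewrite mulmx_block !(mulmx1, mul1mx, mulmx0, mul0mx, addr0, add0r) addNr -scalar_mx_block.
Qed.

Lemma lower_inv n1 n2 (X : 'M[R]_(n2,n1)) :
  block_mx 1%:M 0 X 1%:M *m block_mx 1%:M 0 (-X) 1%:M = 1%:M.
Proof.
by rewrite mulmx_block !(mulmx1, mul1mx, mulmx0, mul0mx, addr0, add0r) addrN -scalar_mx_block.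
Qed.

Lemma diag_inv n1 n2 (U V : 'M[R]_n1) : U *m V = 1%:M ->
  block_mx U 0 0 (1%:M : 'M_n2) *m block_mx V 0 0 1%:M = 1%:M.
Proof.
by move=> h; rewrite mulmx_block !(mulmx1, mul1mx, mulmx0, mul0mx, addr0, add0r) h -scalar_mx_block.
Qed.

Lemma Ulem m (r : 'M[R]_(1, 1 + m)) : SRm m -> runi r ->
  exists U V : 'M[R]_(1 + m),
    [/\ U *m V = 1%:M, V *m U = 1%:M & r *m U = row_mx 1%:M 0].
Proof.
move=> Hs [Z hZ].
case: (row_split r) => r0 [r' Hr]; subst r.
case: (col_split Z) => x0 [x' Hz]; subst Z.
move: hZ; rewrite mul_row_col => hZ.
have : runi (row_mx r' r0) by exists (col_mx x' x0); rewrite mul_row_col addrC.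
case/Hs => c [z hz].
set s := r' + r0 *m c.
pose U1 : 'M_(1 + m) := block_mx 1%:M c 0 1%:M.
pose V1 : 'M_(1 + m) := block_mx 1%:M (-c) 0 1%:M.
pose U2 : 'M_(1 + m) := block_mx 1%:M 0 (z *m (1%:M - r0)) 1%:M.
pose V2 : 'M_(1 + m) := block_mx 1%:M 0 (-(z *m (1%:M - r0))) 1%:M.
pose U3 : 'M_(1 + m) := block_mx 1%:M (-s) 0 1%:M.
pose V3 : 'M_(1 + m) := block_mx 1%:M s 0 1%:M.
have e1 : U1 *m V1 = 1%:M by exact: upper_inv.
have e1' : V1 *m U1 = 1%:M by rewrite /V1 /U1 -{2}(opprK c); exact: upper_inv.
have e2 : U2 *m V2 = 1%:M by exact: lower_inv.
have e2' : V2 *m U2 = 1%:M.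
  by rewrite /V2 /U2 -{2}(opprK (z *m (1%:M - r0))); exact: lower_inv.
have e3 : U3 *m V3 = 1%:M by rewrite /U3 /V3 -{2}(opprK s); exact: upper_inv.
have e3' : V3 *m U3 = 1%:M by exact: upper_inv.
exists (U1 *m U2 *m U3), (V3 *m V2 *m V1); split.
- by rewrite -!mulmxA (mulmxA U3) e3 mul1mx (mulmxA U2) e2 mul1mx e1.
- by rewrite -!mulmxA (mulmxA V1) e1' mul1mx (mulmxA V2) e2' mul1mx e3'.
- rewrite /U1 /U2 /U3 !mulmxA !mul_row_block !mulmx1 !mulmx0 !addr0 add0r.
  rewrite (addrC (r0 *m c)) -/s mulmxA hz mul1mx addrC subrK.
  by rewrite mul1mx addNr.
Qed.
Lemma drop0col a b c d (F1 : 'M[R]_(a, b)) (G1 : 'M_(a, c)) :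
  runi (row_mx (row_mx (0 : 'M_(a,d)) F1) G1) -> runi (row_mx F1 G1).
Proof.
case=> Z hZ.
case: (col_split Z) => Za [Zb Hz]; subst Z.
case: (col_split Za) => z0 [Z1 Hz]; subst Za.
exists (col_mx Z1 Zb); move: hZ; by rewrite !mul_row_col mul0mx add0r.
Qed.

Lemma blk_runi a b c (X : 'M[R]_(a, c)) (Y : 'M_(b, c)) :
  runi Y -> runi (block_mx (1%:M : 'M_a) X 0 Y).
Proof.
case=> Z hZ; exists (block_mx 1%:M (- (X *m Z)) 0 Z).
by rewrite mulmx_block !(mulmx1, mul1mx, mulmx0, mul0mx, addr0, add0r) hZ addNr -scalar_mx_block.
Qed.

Lemma ML n0 (Hs : SRm n0.+1) k0 : forall k' (F : 'M[R]_(k0.+1, k0.+1 + n0))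
   (G : 'M_(k0.+1, k')), runi (row_mx F G) ->
   exists H : 'M_(k', k0.+1 + n0), runi (F + G *m H).
Proof.
elim: k0 => [|k0 IH] k'.
  by move=> F G hFG; exact: (@T1 (1 + n0)).
change (forall (F : 'M[R]_(1 + k0.+1, 1 + (k0.+1 + n0))) (G : 'M_(1 + k0.+1, k')),
  runi (row_mx F G) -> exists H : 'M_(k', 1 + (k0.+1 + n0)), runi (F + G *m H)).
move=> F G hFG.
have Hs' : SRm (k0.+1 + n0) by apply: (SRm_mono Hs); rewrite addSn ltnS leq_addl.
have Hs'' : SRm (1 + (k0.+1 + n0)) by apply: (SRm_mono Hs); rewrite add1n ltnS addSn ltnW // ltnS leq_addl.
case: (col_split F) => fr [Fd HF]; subst F.
case: (col_split G) => gr [Gd HG]; subst G.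
rewrite -block_mxEh in hFG.
have h1 : runi (row_mx fr gr).
  by have := runi_usub hFG; rewrite /block_mx col_mxKu.
case: (T1 Hs'' h1) => h hh.
case: (Ulem Hs' hh) => U [V [hUV hVU hrU]].
case: (row_split ((Fd + Gd *m h) *m U)) => q [F1 hFd].
pose G1 := Gd - q *m gr.
have h2 : runi (row_mx F1 G1).
  have s1 := runi_mulr hFG (lower_inv h).
  have s2 := runi_mulr s1 (diag_inv k' hUV).
  have L : runi (block_mx 1%:M 0 (-q) 1%:M : 'M_(1 + k0.+1)).
    by exists (block_mx 1%:M 0 q 1%:M); rewrite -{2}(opprK q); exact: lower_inv.
  have s3 := runi_dsub (runi_mull L s2).
  apply: (@drop0col _ _ _ 1).
  move: s3; set E := dsubmx _; suff eE : E = row_mx (row_mx 0 F1) G1 by rewrite eE; move=> ?.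
  rewrite /E !mulmx_block !mulmx1 !mulmx0 !mul1mx !mul0mx !addr0 !add0r hrU hFd.
  rewrite /block_mx col_mxKd mul_mx_row mulmx1 mulmx0 add_row_mx addNr add0r.
  by rewrite /G1 mulNmx addrC.
case: (IH k' F1 G1 h2) => H0 hH0.
exists (h + row_mx 0 H0 *m V).
have -> : col_mx fr Fd + col_mx gr Gd *m (h + row_mx 0 H0 *m V) =
   ((col_mx fr Fd + col_mx gr Gd *m h) *m U + col_mx gr Gd *m row_mx 0 H0) *m V.
  by rewrite mulmxDl -mulmxA hUV mulmx1 mulmxDr -addrA -!mulmxA.
apply: (runi_mulr _ hVU).
apply: (@runi_cancell _ _ _ (block_mx 1%:M 0 q 1%:M)); first exact: lower_inv.
suff -> : (col_mx fr Fd + col_mx gr Gd *m h) *m U + col_mx gr Gd *m row_mx 0 H0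
   = block_mx 1%:M (gr *m H0) q (F1 + Gd *m H0).
  rewrite mulmx_block !(mul1mx, mul0mx, addr0, add0r) mulNmx mulmx1 addNr.
  have -> : - q *m (gr *m H0) + (F1 + Gd *m H0) = F1 + G1 *m H0.
    by rewrite /G1 mulmxBl mulNmx -mulmxA addrC -addrA.
  exact: blk_runi.
rewrite mul_col_mx add_col_mx mul_col_mx hrU hFd mul_col_row !mulmx0.
by rewrite /block_mx add_col_mx !add_row_mx !addr0 !add0r.
Qed.
End ML.

Section Glue.
Variables (A : pzRingType) (p : A) (Hp : p * p = p).
Local Notation B := (corner Hp).
Local Notation v := (map_mx (fun x : B => val x)).

Lemma val_sum I (r : seq I) (P : pred I) (F : I -> B) :
  val (\sum_(i <- r | P i) F i) = \sum_(i <- r | P i) val (F i).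
Proof. by elim/big_rec2: _ => [|i u w _ <-]; rewrite ?cval0 ?cvalD. Qed.

Lemma vM m n l (X : 'M[B]_(m,n)) (Y : 'M_(n,l)) : v (X *m Y) = v X *m v Y.
Proof.
apply/matrixP => i j; rewrite !mxE val_sum; apply: eq_bigr => k _.
by rewrite !mxE cvalM.
Qed.
Lemma vD m n (X Y : 'M[B]_(m,n)) : v (X + Y) = v X + v Y.
Proof. by apply/matrixP => i j; rewrite !mxE cvalD. Qed.
Lemma v1 m : v (1%:M : 'M[B]_m) = p%:M.
Proof.
apply/matrixP => i j; rewrite !mxE; case: (i == j); first by rewrite !mulr1n cval1.
by rewrite !mulr0n cval0.
Qed.
Lemma vinj m n (X Y : 'M[B]_(m,n)) : v X = v Y -> X = Y.
Proof.
move=> h; apply/matrixP => i j; apply: val_inj.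
by have := congr1 (fun M : 'M[A]_(m,n) => M i j) h; rewrite !mxE.
Qed.

Lemma mul_mx_scalarA m n (M : 'M[A]_(m,n)) a : M *m a%:M = \matrix_(i,j) (M i j * a).
Proof.
apply/matrixP => i j; rewrite !mxE (bigD1 j) //= big1 ?addr0.
  by rewrite mxE eqxx mulr1n.
by move=> l /negPf hl; rewrite mxE hl mulr0n mulr0.
Qed.
Lemma Pv m n (X : 'M[B]_(m,n)) : p%:M *m v X = v X.
Proof.
by apply/matrixP => i j; rewrite mul_scalar_mx !mxE pxE.
Qed.
Lemma vP m n (X : 'M[B]_(m,n)) : v X *m p%:M = v X.
Proof.
by rewrite mul_mx_scalarA; apply/matrixP => i j; rewrite !mxE xpE.
Qed.

Lemma cb_subproof (x : A) : p * (p * x * p) * p == p * x * p.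
Proof. by rewrite !mulrA Hp -!mulrA Hp. Qed.
Definition cb (x : A) : B := exist (fun z : A => p * z * p == z) _ (cb_subproof x).
Definition cbm m n (M : 'M[A]_(m,n)) : 'M[B]_(m,n) := \matrix_(i,j) cb (M i j).
Lemma vcbm m n (M : 'M[A]_(m,n)) : p%:M *m M = M -> M *m p%:M = M -> v (cbm M) = M.
Proof.
move=> h1 h2; apply/matrixP => i j; rewrite !mxE /=.
have e1 := congr1 (fun X : 'M[A]_(m,n) => X i j) h1; have e2 := congr1 (fun X : 'M[A]_(m,n) => X i j) h2.
move: e1 e2; rewrite mul_scalar_mx mul_mx_scalarA !mxE => e1 e2.
by rewrite e1 e2.
Qed.

Lemma mx11_eq (M N : 'M[A]_1) : M 0 0 = N 0 0 -> M = N.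
Proof. by move=> h; apply/matrixP => i j; rewrite !ord1. Qed.

Lemma corner_mul (x y : A) : in_corner p x -> in_corner p y -> in_corner p (x * y).
Proof.
rewrite /in_corner => hx hy.
have px : p * x = x by rewrite -hx !mulrA Hp.
have yp : y * p = y by rewrite -hy -!mulrA Hp.
by rewrite mulrA px -mulrA yp.
Qed.

Lemma in_corner_val (z : B) : in_corner p (val z).
Proof. exact: (eqP (valP z)). Qed.

Lemma SR_B n : corner_sr_cond p n -> SRm B n.
Proof.
move=> Hc a g [Z hZ].
case: (col_split Z) => x [y Hz]; subst Z.
move: hZ; rewrite mul_row_col => hZ.
have h00 := congr1 (fun M : 'M[B]_1 => val (M 0 0)) hZ.
move: h00; rewrite /= !mxE cval1 cvalD !val_sum big_ord1 !cvalM => h00.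
pose a' i := val (a 0 i); pose b' := val (g 0 0).
have ha : forall i, in_corner p (a' i) by move=> i; exact: in_corner_val.
have hb : in_corner p b' by exact: in_corner_val.
have : corner_right_unimodular_ext p a' b'.
  move=> x0 hx0; exists (fun i => val (x i 0) * x0), (val (y 0 0) * x0); split.
  - by move=> i; apply: corner_mul => //; exact: in_corner_val.
  - by apply: corner_mul => //; exact: in_corner_val.
  have px0 : p * x0 = x0 by rewrite -hx0 !mulrA Hp.
  rewrite -[RHS]px0 -[in RHS]h00 mulrDl mulr_suml; congr (_ + _).
    by apply: eq_bigr => i _; rewrite mulrA.
  by rewrite mulrA.
case/(Hc a' b' ha hb) => c [hc hcu].
have [z [hz hzE]] := hcu p (etrans (congr1 (fun t => t * p) Hp) Hp).
pose mk (t : A) (ht : in_corner p t) : B := exist (fun z : A => p * z * p == z) t (introT eqP ht).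
exists (\row_i mk (c i) (hc i)), (\col_i mk (z i) (hz i)).
apply: vinj; rewrite vM vD vM v1; apply: mx11_eq.
rewrite !mxE eqxx mulr1n; apply: (etrans _ hzE); apply: eq_bigr => i _.
rewrite !mxE big_ord1 !mxE /=.
by [].
Qed.
Lemma final_alg n0 (a : 'I_n0.+1 -> A) b (x : 'I_n0.+1 -> A) y d1 w1
    (dr wc : 'I_n0 -> A) :
  (forall i, dr i * p = dr i) ->
  (a ord0 + (\sum_(l < n0) a (lift ord0 l) * (1 - p) * x (lift ord0 l) + b * y) * d1) * w1
   + \sum_(i < n0) (a (lift ord0 i) * p +
       (\sum_(l < n0) a (lift ord0 l) * (1 - p) * x (lift ord0 l) + b * y) * dr i) * wc i = 1 ->
  exists c z : 'I_n0.+1 -> A, \sum_(i < n0.+1) (a i + b * c i) * z i = 1.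
Proof.
move=> hd.
set q := 1 - p.
have hdq : forall i, dr i * q = 0 by move=> i; rewrite /q mulrBr mulr1 hd subrr.
clearbody q.
set S1 := \sum_(l < n0) a (lift ord0 l) * q * x (lift ord0 l).
move=> hE.
pose Om := d1 * w1 + \sum_(i < n0) dr i * wc i.
exists (fun i => if unlift ord0 i is Some j then y * dr j else y * d1).
exists (fun i => if unlift ord0 i is Some j then p * wc j + q * x i * Om else w1).
rewrite big_ord_recl unlift_none.
under eq_bigr => i _ do rewrite liftK.
apply: etrans hE.
have hsum : \sum_(i < n0) (a (lift ord0 i) + b * (y * dr i)) *
     (p * wc i + q * x (lift ord0 i) * Om) =
   \sum_(i < n0) (a (lift ord0 i) * p * wc i + b * y * dr i * wc i) + S1 * Om.
  rewrite /S1 mulr_suml -big_split; apply: eq_bigr => i _ /=.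
  have h0 : b * y * dr i * q = 0 by rewrite -mulrA hdq mulr0.
  have h1 : b * y * dr i * p = b * y * dr i by rewrite -mulrA hd.
  rewrite mulrDr !mulrDl !mulrA h0 h1 !mul0r addr0.
  by [].
rewrite hsum.
have hsum2 : \sum_(i < n0) (a (lift ord0 i) * p + (S1 + b * y) * dr i) * wc i =
   \sum_(i < n0) (a (lift ord0 i) * p * wc i + b * y * dr i * wc i) +
   S1 * \sum_(i < n0) dr i * wc i.
  rewrite mulr_sumr -big_split; apply: eq_bigr => i _ /=.
  by rewrite !mulrDl !mulrA addrAC addrA.
rewrite hsum2 /Om.
set X := \sum_(i < n0) (_ + _).
set Q := \sum_(i < n0) dr i * wc i.
rewrite !mulrDl !mulrDr !mulrA.
rewrite !addrA; congr (_ + _).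
rewrite -!addrA; congr (_ + _).
by rewrite (addrC (S1 * d1 * w1)) -addrA.
Qed.
Lemma sr_A n0 : SRm B n0.+1 -> is_full p -> sr_cond A n0.+1.
Proof.
move=> Hs Hf a b hab.
have [x [y hxy]] : exists x y, \sum_i a i * x i + b * y = 1.
  by case: (hab 1) => c [d h]; exists c, d.
suff [c [z hz]] : exists c z : 'I_n0.+1 -> A, \sum_(i < n0.+1) (a i + b * c i) * z i = 1.
  exists c => t; exists (fun i => z i * t).
  have := congr1 (fun s => s * t) hz; rewrite mul1r mulr_suml => h.
  by apply: etrans h; apply: eq_bigr => i _; rewrite mulrA.
case: (Hf 1) => k [u [vv huv]].
case: k u vv huv => [|k0] u vv huv.
  rewrite big_ord0 in huv.
  exists (fun _ => 0), (fun _ => 0); rewrite big1 ?huv // => i _; by rewrite mulr0.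
pose Tm : 'M[A]_(k0.+1, 1) := \col_j (p * vv j).
pose Sm : 'M[A]_(1, k0.+1) := \row_j (u j * p).
pose P : 'M[A]_(k0.+1) := p%:M.
have hST : Sm *m Tm = 1%:M.
  apply: mx11_eq; rewrite !mxE eqxx mulr1n [RHS]huv; apply: eq_bigr => j _.
  by rewrite !mxE mulrA -(mulrA (u j)) Hp.
have hPT : P *m Tm = Tm.
  by rewrite /P mul_scalar_mx; apply/matrixP => i j; rewrite !mxE mulrA Hp.
have hSP : Sm *m P = Sm.
  by rewrite /P mul_mx_scalarA; apply/matrixP => i j; rewrite !mxE -mulrA Hp.
have hPP : P *m P = P by rewrite /P -scalar_mxM Hp.
pose E' := P - Tm *m Sm.
have hSE : Sm *m E' = 0 by rewrite /E' mulmxBr hSP mulmxA hST mul1mx subrr.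
have hET : E' *m Tm = 0 by rewrite /E' mulmxBl hPT -mulmxA hST mulmx1 subrr.
have hEP : E' *m P = E' by rewrite /E' mulmxBl hPP -mulmxA hSP.
have hPE : P *m E' = E' by rewrite /E' mulmxBr hPP mulmxA hPT.
have hEE : E' *m E' = E'.
  by rewrite {2}/E' mulmxBr hEP mulmxA hET mul0mx subr0.
have hEdef : E' = P - Tm *m Sm by [].
clearbody E'.
pose a1 := a ord0; pose x1 := x ord0.
pose beta := \sum_(l < n0) a (lift ord0 l) * (1 - p) * x (lift ord0 l) + b * y.
pose Arow : 'M[A]_(1, n0) := \row_i (a (lift ord0 i) * p).
pose Xcol : 'M[A]_(n0, 1) := \col_i (p * x (lift ord0 i)).
pose F1A := Tm *m a1%:M *m Sm + E'.
pose F2A := Tm *m Arow.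
pose GA := Tm *m beta%:M *m Sm.
pose X1A := Tm *m x1%:M *m Sm + E'.
pose X2A := Xcol *m Sm.
have hArP : Arow *m p%:M = Arow.
  by rewrite mul_mx_scalarA; apply/matrixP => i j; rewrite !mxE -mulrA Hp.
have hPXc : p%:M *m Xcol = Xcol.
  by rewrite mul_scalar_mx; apply/matrixP => i j; rewrite !mxE mulrA Hp.
have cF1l : P *m F1A = F1A by rewrite /F1A mulmxDr hPE !mulmxA hPT.
have cF1r : F1A *m P = F1A by rewrite /F1A mulmxDl hEP -!mulmxA hSP.
have cF2l : P *m F2A = F2A by rewrite /F2A mulmxA hPT.
have cF2r : F2A *m p%:M = F2A by rewrite /F2A -mulmxA hArP.
have cGl : P *m GA = GA by rewrite /GA !mulmxA hPT.
have cGr : GA *m P = GA by rewrite /GA -!mulmxA hSP.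
have cX1l : P *m X1A = X1A by rewrite /X1A mulmxDr hPE !mulmxA hPT.
have cX1r : X1A *m P = X1A by rewrite /X1A mulmxDl hEP -!mulmxA hSP.
have cX2l : p%:M *m X2A = X2A by rewrite /X2A mulmxA hPXc.
have cX2r : X2A *m P = X2A by rewrite /X2A -mulmxA hSP.
have hinner : a1%:M *m x1%:M + Arow *m Xcol + beta%:M = (1%:M : 'M[A]_1).
  apply: mx11_eq; rewrite !mxE big_ord1 !mxE eqxx !mulr1n -hxy big_ord_recl.
  rewrite /beta addrA; congr (_ + _); rewrite -addrA; congr (_ + _).
  rewrite -big_split; apply: eq_bigr => i _ /=; rewrite !mxE.
  by rewrite mulrA -(mulrA _ p p) Hp -mulrDl -mulrDr addrC subrK mulr1.
have h1 : forall M N : 'M[A]_1, (Tm *m M *m Sm) *m (Tm *m N *m Sm) = Tm *m (M *m N) *m Sm.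
  by move=> M N; rewrite -!mulmxA (mulmxA Sm) hST mul1mx.
have h2 : forall M : 'M[A]_1, Tm *m M *m Sm *m E' = 0.
  by move=> M; rewrite -mulmxA hSE mulmx0.
have h3 : forall M : 'M[A]_1, E' *m (Tm *m M *m Sm) = 0.
  by move=> M; rewrite !mulmxA hET !mul0mx.
have heq : F1A *m X1A + F2A *m X2A + GA *m P = P.
  rewrite cGr /F1A /X1A /F2A /X2A /GA mulmxDl !mulmxDr h1 h2 h3 hEE addr0 add0r.
  have -> : Tm *m Arow *m (Xcol *m Sm) = Tm *m (Arow *m Xcol) *m Sm by rewrite !mulmxA.
  have -> : P = Tm *m (a1%:M *m x1%:M + Arow *m Xcol + beta%:M) *m Sm + E'.
    by rewrite hinner mulmx1 hEdef addrC subrK.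
  rewrite !mulmxDr !mulmxDl -!addrA; congr (_ + _).
  by rewrite addrC -!addrA.
have hEF1 : E' *m F1A = E' by rewrite /F1A mulmxDr h3 hEE add0r.
have hEG : E' *m GA = 0 by exact: h3.
have hEF2 : E' *m F2A = 0 by rewrite /F2A mulmxA hET mul0mx.
have hSF1 : Sm *m F1A = a1%:M *m Sm.
  by rewrite /F1A mulmxDr hSE addr0 !mulmxA hST mul1mx.
have hSG : Sm *m GA = beta%:M *m Sm by rewrite /GA !mulmxA hST mul1mx.
have hSF2 : Sm *m F2A = Arow by rewrite /F2A mulmxA hST mul1mx.
have vF1 : v (cbm F1A) = F1A by exact: vcbm.
have vF2 : v (cbm F2A) = F2A by exact: vcbm.
have vG : v (cbm GA) = GA by exact: vcbm.
have vX1 : v (cbm X1A) = X1A by exact: vcbm.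
have vX2 : v (cbm X2A) = X2A by exact: vcbm.
have hrun : runi (row_mx (row_mx (cbm F1A) (cbm F2A)) (cbm GA)).
  exists (col_mx (col_mx (cbm X1A) (cbm X2A)) 1%:M); apply: vinj.
  by rewrite vM !map_row_mx !map_col_mx vF1 vF2 vG vX1 vX2 v1 !mul_row_col.
clearbody F1A F2A GA X1A X2A.
have [H [Z hZ]] := @ML B n0 Hs k0 k0.+1 _ _ hrun.
case: (row_split H) => H1 [H2 HH]; subst H.
case: (col_split Z) => Z1 [Z2 HZ]; subst Z.
move: hZ; rewrite mul_mx_row add_row_mx mul_row_col => hZ.
have hv := congr1 v hZ; rewrite !(vD, vM) v1 vF1 vF2 vG in hv.
have hE1 : E' *m v Z1 = E'.
  have := congr1 (mulmx E') hv; rewrite hEP.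
  rewrite mulmxDr !mulmxA !mulmxDr !mulmxA hEF1 hEG hEF2 !mul0mx addr0 add0r.
  by rewrite mul0mx addr0.
have hZT : v Z1 *m Tm = Tm *m (Sm *m v Z1 *m Tm).
  rewrite -{1}(Pv Z1) -/P -(subrK (Tm *m Sm) P) -hEdef !mulmxDl hE1 hET add0r.
  by rewrite !mulmxA.
have hfin : (a1%:M + beta%:M *m (Sm *m v H1 *m Tm)) *m (Sm *m v Z1 *m Tm)
   + (Arow + beta%:M *m (Sm *m v H2)) *m (v Z2 *m Tm) = 1%:M.
  have h := congr1 (fun M => Sm *m M *m Tm) hv; cbv beta in h.
  rewrite -/P hSP hST mulmxDr mulmxDl !mulmxA !mulmxDr !mulmxA hSF1 hSG hSF2 in h.
  rewrite -(mulmxA _ (v Z1) Tm) hZT mulmxA mulmxDl -(mulmxA a1%:M) hST mulmx1 in h.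
  by move: h; rewrite !mulmxA; exact: id.
set D1 := Sm *m v H1 *m Tm in hfin; set W1 := Sm *m v Z1 *m Tm in hfin.
set Drow := Sm *m v H2 in hfin; set Wcol := v Z2 *m Tm in hfin.
have hd : forall i, Drow 0 i * p = Drow 0 i.
  move=> i.
  have e : Drow *m p%:M = Drow by rewrite /Drow -mulmxA vP.
  have := congr1 (fun M : 'M[A]_(1, n0) => M 0 i) e.
  by rewrite mul_mx_scalarA mxE.
have hs := congr1 (fun M : 'M[A]_1 => M 0 0) hfin; cbv beta in hs.
clearbody D1 W1 Drow Wcol.
rewrite !mul_scalar_mx !mxE big_ord1 !mxE eqxx mulr1n /= in hs.
apply: (@final_alg n0 a b x y (D1 0 0) (W1 0 0) (fun i => Drow 0 i) (fun i => Wcol i 0) hd).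
apply: etrans hs; congr (_ + _).
by apply: eq_bigr => i _; rewrite !mxE.
Qed.
End Glue.

Unset Implicit Arguments.
Theorem theorem7 (A : pzRingType) (p : A) :
  is_idem p -> is_full p ->
  forall sA sP : option nat,
    is_stable_rank (@sr_cond A) sA ->
    is_stable_rank (corner_sr_cond p) sP ->
    ext_le sA sP.
Proof.
move=> Hp Hf sA sP hA hP.
case: sP hP => [n [hn [hcn hmin]]|hP]; last by case: sA hA.
have hc : sr_cond A n.
  case: n hn hcn hmin => // n0 _ hcn _.
  exact: (sr_A (SR_B hcn) Hf).
case: sA hA => [m [hm [hcm hminA]]|hA] /=.
  rewrite leqNgt; apply/negP => hlt; exact: (hminA n hn hlt hc).
exact: (hA n hn hc).
Qed.
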